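(* Let $V$ be a finite set and $d$ a metric on $V$ (nonnegative, symmetric, satisfying the triangle inequality). For a rooted binary tree $T$ whose leaves are in bijection with $V$, let $R_T(V)=\sum_{\{i,j\}\subseteq V}d(i,j)\,|\mathrm{leaves}(T[i\vee j])|$. Then for every such tree $T$, $R_T(V)\ge\frac12\max_{T'}R_{T'}(V)$, the maximum being over all such trees $T'$.
   Context: $T[i\vee j]$ denotes the subtree of $T$ rooted at the least common ancestor of the leaves $i$ and $j$, and $|\mathrm{leaves}(T[i\vee j])|$ is its number of leaves. The sum is over unordered pairs of distinct elements. *)

(* Defs.v *)
From HB Require Import structures.
From mathcomp Require Import all_boot all_order all_algebra.
Set Implicit Arguments. Unset Strict Implicit. Unset Printing Implicit Defensive.
Import Order.TTheory GRing.Theory Num.Theory.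

Inductive btree (T : Type) : Type :=
  | Leaf of T
  | Node of btree T & btree T.
Arguments Leaf {T} _.
Arguments Node {T} _ _.

Fixpoint leaves {T : Type} (t : btree T) : seq T :=
  match t with
  | Leaf x => [:: x]
  | Node l r => leaves l ++ leaves r
  end.

(* The leaves of t are in bijection with V: each element of V labels
   exactly one leaf. *)
Definition tree_on (V : finType) (t : btree V) : Prop :=
  perm_eq (leaves t) (enum V).

(* |leaves(T[i \/ j])| : number of leaves of the subtree rooted at the
   least common ancestor of the leaves i and j. *)
Fixpoint lca_size {V : eqType} (t : btree V) (i j : V) : nat :=
  match t with
  | Leaf _ => 1
  | Node l r =>
      if (i \in leaves l) && (j \in leaves l) then lca_size l i j
      else if (i \in leaves r) && (j \in leaves r) then lca_size r i j
      else size (leaves t)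
  end.

(* R_T(V) = sum over unordered pairs {i,j} of distinct elements of
   d(i,j) * |leaves(T[i \/ j])|; unordered pairs are enumerated as
   ordered pairs (i,j) with enum_rank i < enum_rank j. *)
Definition revenue (R : ringType) (V : finType) (d : V -> V -> R)
    (t : btree V) : R :=
  \sum_(i : V) \sum_(j : V | (enum_rank i < enum_rank j)%N)
     d i j * (lca_size t i j)%:R.

(* Main.v *)
Require Import Defs.
From mathcomp Require Import all_boot all_order all_algebra.
From mathcomp Require Import ring lra.
Import Order.TTheory GRing.Theory Num.Theory.
Local Open Scope ring_scope.

Section Aux.
Variables (R : realFieldType) (V : finType) (d : V -> V -> R).
Hypothesis d_nonneg : forall x y, 0 <= d x y.
Hypothesis d_sym : forall x y, d x y = d y x.
Hypothesis d_tri : forall x y z, d x z <= d x y + d y z.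

Definition P (s : seq V) (f : V -> V -> R) :=
  \sum_(i <- s) \sum_(j <- s | i != j) f i j.
Definition X (s t : seq V) := \sum_(i <- s) \sum_(j <- t) d i j.

Lemma lca_sym (t : btree V) i j : lca_size t i j = lca_size t j i.
Proof.
elim: t => //= l IHl r IHr.
by rewrite [(j \in leaves l) && _]andbC [(j \in leaves r) && _]andbC IHl IHr.
Qed.

Lemma lca_le (t : btree V) i j : (lca_size t i j <= size (leaves t))%N.
Proof.
elim: t => //= l IHl r IHr; rewrite size_cat.
case: ifP => _; first by apply: leq_trans IHl (leq_addr _ _).
case: ifP => _ //; by apply: leq_trans IHr (leq_addl _ _).
Qed.

Lemma cross_nofilter (L M : seq V) (f : V -> V -> R) :
  (forall i, i \in L -> i \notin M) ->
  \sum_(i <- L) \sum_(j <- M | i != j) f i j = \sum_(i <- L) \sum_(j <- M) f i j.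
Proof.
move=> dis; rewrite big_seq [RHS]big_seq; apply: eq_bigr => i Hi.
rewrite big_seq_cond [RHS]big_seq; apply: eq_bigl => j.
case Hj: (j \in M) => //=; apply/eqP => E; subst j.
by move: (dis _ Hi); rewrite Hj.
Qed.

Lemma P_cat (L M : seq V) f :
  (forall i, i \in L -> i \notin M) ->
  P (L ++ M) f = P L f + P M f + \sum_(i <- L) \sum_(j <- M) f i j
     + \sum_(i <- M) \sum_(j <- L) f i j.
Proof.
move=> dis; have dis' : forall i, i \in M -> i \notin L.
  by move=> i HM; apply/negP => HL; move: (dis _ HL); rewrite HM.
rewrite /P big_cat /=.
rewrite (eq_bigr (fun i => \sum_(j <- L | i != j) f i j + \sum_(j <- M | i != j) f i j));
  last by move=> i _; rewrite big_cat.
rewrite [X in _ + X](eq_bigr (fun i => \sum_(j <- L | i != j) f i j + \sum_(j <- M | i != j) f i j));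
  last by move=> i _; rewrite big_cat.
rewrite !big_split /= (cross_nofilter _ _ _ dis) (cross_nofilter _ _ _ dis').
ring.
Qed.

Lemma P_eq (s : seq V) (f g : V -> V -> R) : (forall i j, i \in s -> j \in s -> f i j = g i j) ->
  P s f = P s g.
Proof.
move=> H; rewrite /P big_seq [RHS]big_seq; apply: eq_bigr => i Hi.
rewrite big_seq_cond [RHS]big_seq_cond; apply: eq_bigr => j /andP[Hj _].
exact: H.
Qed.

Lemma cross_eq (L M : seq V) (f g : V -> V -> R) : (forall i j, i \in L -> j \in M -> f i j = g i j) ->
  \sum_(i <- L) \sum_(j <- M) f i j = \sum_(i <- L) \sum_(j <- M) g i j.
Proof.
move=> H; rewrite big_seq [RHS]big_seq; apply: eq_bigr => i Hi.
rewrite big_seq [RHS]big_seq; apply: eq_bigr => j Hj; exact: H.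
Qed.

Lemma sum_const_seq (s : seq V) (c : R) : \sum_(j <- s) c = (size s)%:R * c.
Proof.
elim: s => [|x s IH]; first by rewrite big_nil mul0r.
by rewrite big_cons IH /= -addn1 natrD mulrDl mul1r addrC.
Qed.

Lemma X_sym L M : X L M = X M L.
Proof. by rewrite /X exchange_big /=; apply: eq_bigr => i _; apply: eq_bigr => j _. Qed.

Lemma cross_bound (L M : seq V) :
  (size M)%:R * P L d <= 2 * (size L)%:R * X L M.
Proof.
pose row i := \sum_(j <- M) d i j.
have step : forall i i', (size M)%:R * d i i' <= row i + row i'.
  move=> i i'; rewrite /row -big_split /= -sum_const_seq.
  by apply: ler_sum => j _; rewrite [d i' j]d_sym.
have nn : forall i, 0 <= row i by move=> i; apply: sumr_ge0 => j _.
rewrite /P mulr_sumr.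
apply: (@le_trans _ _ (\sum_(i <- L) \sum_(i' <- L) (row i + row i'))).
  apply: ler_sum => i _; rewrite mulr_sumr.
  apply: (@le_trans _ _ (\sum_(i' <- L | i != i') (row i + row i'))).
    by apply: ler_sum => i' _; apply: step.
  rewrite [X in _ <= X](bigID (fun i' => i != i')) /= lerDl.
  by apply: sumr_ge0 => j _; apply: addr_ge0.
rewrite (eq_bigr (fun i => (size L)%:R * row i + X L M)); last first.
  by move=> i _; rewrite big_split /= sum_const_seq.
rewrite big_split /= -mulr_sumr sum_const_seq.
rewrite /X -/row; lra.
Qed.

Lemma tree_bound (t : btree V) : uniq (leaves t) ->
  (size (leaves t))%:R * P (leaves t) d <=
  2 * P (leaves t) (fun i j => d i j * (lca_size t i j)%:R).
Proof.
elim: t => [x|l IHl r IHr].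
  by move=> _; rewrite /P /= !big_cons !big_nil /= ?eqxx ?big_nil /= addr0 !mulr0.
have -> : leaves (Node l r) = leaves l ++ leaves r by [].
rewrite cat_uniq => /and3P[ul hlr ur].
have dis : forall i, i \in leaves l -> i \notin leaves r.
  move=> i Hi; apply/negP => Hr; move/hasPn: hlr => /(_ _ Hr) /=.
  by rewrite Hi.
have dis' : forall i, i \in leaves r -> i \notin leaves l.
  by move=> i HM; apply/negP => HL; move: (dis _ HL); rewrite HM.
rewrite !P_cat //.
set n := size (leaves l ++ leaves r).
have e1 : P (leaves l) (fun i j => d i j * (lca_size (Node l r) i j)%:R) =
          P (leaves l) (fun i j => d i j * (lca_size l i j)%:R).
  by apply: P_eq => i j Hi Hj /=; rewrite Hi Hj.
have e2 : P (leaves r) (fun i j => d i j * (lca_size (Node l r) i j)%:R) =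
          P (leaves r) (fun i j => d i j * (lca_size r i j)%:R).
  apply: P_eq => i j Hi Hj /=; by rewrite (negbTE (dis' _ Hi)) Hi Hj.
have e3 : \sum_(i <- leaves l) \sum_(j <- leaves r) d i j * (lca_size (Node l r) i j)%:R
          = X (leaves l) (leaves r) * n%:R.
  rewrite (cross_eq _ _ _ (fun i j => d i j * n%:R)); last first.
    move=> i j Hi Hj /=; by rewrite Hi (negbTE (dis' _ Hj)) (negbTE (dis _ Hi)).
  by rewrite /X mulr_suml; apply: eq_bigr => i _; rewrite mulr_suml.
have e4 : \sum_(i <- leaves r) \sum_(j <- leaves l) d i j * (lca_size (Node l r) i j)%:R
          = X (leaves l) (leaves r) * n%:R.
  rewrite (cross_eq _ _ _ (fun i j => d i j * n%:R)); last first.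
    move=> i j Hi Hj /=; by rewrite (negbTE (dis' _ Hi)) Hi (negbTE (dis _ Hj)).
  by rewrite X_sym /X mulr_suml; apply: eq_bigr => i _; rewrite mulr_suml.
rewrite e1 e2 e3 e4.
have c1 := cross_bound (leaves l) (leaves r).
have c2 := cross_bound (leaves r) (leaves l).
rewrite X_sym in c2.
have -> : \sum_(i <- leaves r) \sum_(j <- leaves l) d i j = X (leaves l) (leaves r)
  by rewrite X_sym.
rewrite -/(X (leaves l) (leaves r)).
have i1 := IHl ul; have i2 := IHr ur.
rewrite /n size_cat natrD.
set a := (size (leaves l))%:R in c1 c2 i1 *.
set b := (size (leaves r))%:R in c1 c2 i2 *.
set x := X _ _ in c1 c2 *.
nra.
Qed.

Lemma P_perm {s1 s2 : seq V} {f : V -> V -> R} : perm_eq s1 s2 -> P s1 f = P s2 f.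
Proof.
move=> H; rewrite /P (perm_big _ H); apply: eq_bigr => i _; exact: perm_big.
Qed.

Lemma P_enum (g : V -> V -> R) : P (enum V) g = \sum_i \sum_(j | i != j) g i j.
Proof.
rewrite /P big_enum /=; apply: eq_bigr => i _; by rewrite big_enum_cond.
Qed.

Lemma revenue2 (t : btree V) : tree_on t ->
  2 * revenue d t = P (leaves t) (fun i j => d i j * (lca_size t i j)%:R).
Proof.
move=> Ht; rewrite (P_perm Ht) P_enum /revenue.
set g := fun i j => d i j * (lca_size t i j)%:R.
have gs : forall i j, g i j = g j i by move=> i j; rewrite /g d_sym lca_sym.
rewrite [RHS](eq_bigr (fun i => \sum_(j | (enum_rank i < enum_rank j)%N) g i j
    + \sum_(j | (enum_rank j < enum_rank i)%N) g i j)); last first.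
  move=> i _; rewrite (bigID (fun j => (enum_rank i < enum_rank j)%N)) /=.
  congr (_ + _); apply: eq_bigl => j.
    case: ltnP => H; rewrite ?andbF ?andbT //.
    by apply/eqP => E; subst j; rewrite ltnn in H.
  case: (eqVneq i j) => [->|ne] /=; first by rewrite ltnn.
  rewrite -leqNgt leq_eqVlt; case: eqP => //= E.
  by move: ne; rewrite (enum_rank_inj (val_inj E)) eqxx.
rewrite big_split /= mulr2n mulrDl !mul1r; congr (_ + _).
rewrite [RHS](eq_bigr (fun i => \sum_j (if (enum_rank j < enum_rank i)%N then g i j else 0)));
  last by move=> i _; rewrite big_mkcond.
rewrite [RHS]exchange_big /=; apply: eq_bigr => i _; rewrite big_mkcond /=.
by apply: eq_bigr => j _; case: ifP => // _; rewrite (gs j i).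
Qed.

Lemma upper (t : btree V) :
  P (leaves t) (fun i j => d i j * (lca_size t i j)%:R) <=
  P (leaves t) d * (size (leaves t))%:R.
Proof.
rewrite /P mulr_suml; apply: ler_sum => i _; rewrite mulr_suml.
apply: ler_sum => j _; apply: ler_wpM2l => //; rewrite ler_nat; exact: lca_le.
Qed.
End Aux.

Theorem mainTheorem13 (R : realFieldType) (V : finType) (d : V -> V -> R)
  (d_nonneg : forall x y, 0 <= d x y)
  (d_sym : forall x y, d x y = d y x)
  (d_tri : forall x y z, d x z <= d x y + d y z)
  (T : btree V) (HT : tree_on T) :
  forall T' : btree V, tree_on T' ->
    (1 / 2) * revenue d T' <= revenue d T.
Proof.
move=> T' HT'.
have u1 := revenue2 _ _ _ d_sym _ HT; have u2 := revenue2 _ _ _ d_sym _ HT'.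
have uT : uniq (leaves T) by rewrite (perm_uniq HT) enum_uniq.
have lo := tree_bound _ _ _ d_nonneg d_sym d_tri _ uT.
have up := upper _ _ _ d_nonneg T'.
rewrite -u1 (P_perm _ _ HT) (perm_size HT) in lo.
rewrite -u2 (P_perm _ _ HT') (perm_size HT') in up.
set D := P _ _ (enum V) d in lo up *.
set n := (size (enum V))%:R in lo up *.
have Dn : 0 <= D * n.
  by apply: mulr_ge0; [apply: sumr_ge0 => i _; apply: sumr_ge0 | apply: ler0n].
nra.
Qed.
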